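(* Let $l\in\{1,2,3\}$ and $\lambda_0>0$. Let the base stations be the points of a homogeneous Poisson point process in $\mathbb R^l$ with intensity $\lambda_0$, with a mobile station at the origin, all transmission powers and shadow fading factors equal to $1$. For an increasing path-loss function $h$, let $\left(\frac CI\right)_h=\frac{1/h(R_1)}{\sum_{i\ge2}1/h(R_i)}$, where $R_1\le R_2\le\cdots$ are the ordered distances of the base stations from the origin. Let $h_1(r)=r^{\varepsilon_1}$ for $r\ge0$ and $h_2(r)=r^{\varepsilon_1}$ for $r\le1$, $h_2(r)=r^{\varepsilon_2}$ for $r>1$, and write $\left(\frac CI\right)_i=\left(\frac CI\right)_{h_i}$. If $\varepsilon_2>\varepsilon_1>l$, then $\left(\frac CI\right)_1\le_{\mathrm{st}}\left(\frac CI\right)_2$. If $\varepsilon_1>\varepsilon_2>l$, then $\left(\frac CI\right)_1\ge_{\mathrm{st}}\left(\frac CI\right)_2$.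
   Context: The mobile is served by the BS with strongest received power (the nearest one) and all other BSs interfere; received power at distance $R$ is $1/h(R)$. For random variables $X,Y$, $X\le_{\mathrm{st}}Y$ means $\mathbb P(X>x)\le\mathbb P(Y>x)$ for all real $x$, and $X\ge_{\mathrm{st}}Y$ means $Y\le_{\mathrm{st}}X$. *)

(* Defs.v *)
From HB Require Import structures.
From mathcomp Require Import all_boot all_order all_algebra.
From mathcomp Require Import all_classical all_reals all_analysis.
Set Implicit Arguments. Unset Strict Implicit. Unset Printing Implicit Defensive.
Import Order.TTheory GRing.Theory Num.Theory.
Import numFieldNormedType.Exports.
Local Open Scope classical_set_scope.
Local Open Scope ring_scope.

Section Defs.
Context {R : realType} {l : nat}.

Definition enorm (x : 'rV[R]_l) : R := Num.sqrt (\sum_(i < l) x ord0 i ^+ 2).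

Definition borel_set (A : set 'rV[R]_l) : Prop := <<s open >> A.

Definition bounded_set (A : set 'rV[R]_l) : Prop :=
  exists M : R, forall x, A x -> enorm x <= M.

Definition box (a b : 'rV[R]_l) : set 'rV[R]_l :=
  [set x | forall i, a ord0 i <= x ord0 i < b ord0 i].
Definition boxvol (a b : 'rV[R]_l) : R := \prod_(i < l) (b ord0 i - a ord0 i).

Definition leb (A : set 'rV[R]_l) : \bar R :=
  ereal_inf [set z | exists a b : nat -> 'rV[R]_l,
     (forall n i, a n ord0 i <= b n ord0 i) /\
     A `<=` \bigcup_n box (a n) (b n) /\
     z = (\sum_(0 <= n <oo) (boxvol (a n) (b n))%:E)%E].

Definition count_eq (S : set 'rV[R]_l) (A : set 'rV[R]_l) (k : nat) : Prop :=
  exists s : seq 'rV[R]_l, uniq s /\ size s = k /\ [set x | x \in s] = S `&` A.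

Definition poisson_pt (m : R) (k : nat) : R := m ^+ k / (k`!)%:R * expR (- m).

Definition is_hPPP d (Omega : measurableType d) (P : probability Omega R)
    (lam : R) (Phi : Omega -> set 'rV[R]_l) : Prop :=
  (forall A k, borel_set A -> bounded_set A ->
      measurable [set w | count_eq (Phi w) A k]) /\
  (forall n (A : 'I_n -> set 'rV[R]_l) (k : 'I_n -> nat),
      (forall i, borel_set (A i) /\ bounded_set (A i)) ->
      (forall i j, i != j -> A i `&` A j = set0) ->
      P [set w | forall i, count_eq (Phi w) (A i) (k i)] =
      (\prod_(i < n) poisson_pt (lam * fine (leb (A i))) (k i))%:E).

(* C/I for path-loss h: served by the nearest BS (distance R_1), all others
   interfere; the interference is the sum over all points minus the serving term. *)
Definition CI (h : R -> R) (S : set 'rV[R]_l) : \bar R :=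
  let R1 := inf (enorm @` S) in
  let C := (h R1)^-1 in
  (C%:E / ((\esum_(x in S) ((h (enorm x))^-1)%:E) - C%:E))%E.

End Defs.

Definition h1 {R : realType} (e1 : R) (r : R) : R := r `^ e1.
Definition h2 {R : realType} (e1 e2 : R) (r : R) : R :=
  if r <= 1 then r `^ e1 else r `^ e2.

Definition st_le {R : realType} d (Omega : measurableType d) (P : probability Omega R)
    (X Y : Omega -> \bar R) : Prop :=
  forall x : R, (P [set w | x%:E < X w] <= P [set w | x%:E < Y w])%E.

(* Main.v *)
Require Import Defs.
From HB Require Import structures.
From mathcomp Require Import all_boot all_order all_algebra.
From mathcomp Require Import all_classical all_reals all_analysis.
From mathcomp Require Import lra ring.
Import Order.TTheory GRing.Theory Num.Theory.
Local Open Scope classical_set_scope.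
Local Open Scope ring_scope.

Section EsumSeq.
Context {R : realType} {T : choiceType}.
Implicit Types (S : set T) (g : T -> R).

Lemma esum_seq_ge S g s : (forall x, S x -> 0 <= g x) -> uniq s -> {subset s <= S} ->
  ((\sum_(x <- s) g x)%:E <= \esum_(x in S) (g x)%:E)%E.
Proof.
move=> g0 us sS; apply: esum_ge; exists [set` s].
  split; first exact: finite_seq.
  by move=> x /= xs; rewrite -in_setE; apply: sS.
by rewrite -sumEFin fsbig_seq.
Qed.

Lemma esum_seq_gt S g (y : \bar R) : (y < \esum_(x in S) (g x)%:E)%E ->
  exists s, [/\ uniq s, {subset s <= S} & (y < (\sum_(x <- s) g x)%:E)%E].
Proof.
move=> /ereal_sup_gt[_ [X [finX XS] <-]] yX.
have [s0 X0] := (finite_seqP X).1 finX.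
exists (undup s0); split; first exact: undup_uniq.
  by move=> x; rewrite mem_undup => xs; rewrite in_setE; apply: XS; rewrite X0.
rewrite -sumEFin fsbig_seq ?undup_uniq//.
have -> : [set` undup s0] = X by rewrite X0; apply/seteqP; split=> x /=; rewrite mem_undup.
exact: yX.
Qed.

Lemma esum_le_seq S g (M : \bar R) :
  (forall s, uniq s -> {subset s <= S} -> ((\sum_(x <- s) g x)%:E <= M)%E) ->
  (\esum_(x in S) (g x)%:E <= M)%E.
Proof.
move=> H; rewrite leNgt; apply/negP => /esum_seq_gt[s [us sS]].
by rewrite ltNge H.
Qed.

End EsumSeq.

Section Goodh.
Context {R : realType}.

Definition goodh (h : R -> R) :=
  [/\ h 0 = 0, (forall r, 0 < r -> 0 < h r),
      (forall r s, 0 < r -> r < s -> h r < h s) &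
      (forall a b, 0 < a -> h a < b -> exists2 r, a < r & h r < b)].

Lemma powR_rc (e a b : R) : 0 < e -> 0 < a -> a `^ e < b ->
  exists2 r, a < r & r `^ e < b.
Proof.
move=> e0 a0 ab.
set m := (a `^ e + b) / 2.
have am : a `^ e < m by rewrite /m; lra.
have mb : m < b by rewrite /m; lra.
have m0 : 0 <= m by apply: le_trans (ltW am); exact: powR_ge0.
exists (m `^ e^-1).
  rewrite ltNge; apply/negP => le.
  have := ge0_ler_powR (ltW e0) _ _ le.
  rewrite -powRrM mulVf ?gt_eqF// powRr1// => /(_ (powR_ge0 _ _)).
  rewrite nnegrE (ltW a0) => /(_ isT).
  by rewrite leNgt am.
by rewrite -powRrM mulVf ?gt_eqF// powRr1.
Qed.

Lemma goodh1 (e : R) : 0 < e -> goodh (h1 e).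
Proof.
move=> e0; split; rewrite /h1.
- by rewrite powR0 ?gt_eqF.
- by move=> r r0; apply: powR_gt0.
- move=> r s r0 rs; apply: gt0_ltr_powR => //; rewrite nnegrE ltW//.
  exact: lt_trans rs.
- move=> a b a0 ab; exact: powR_rc.
Qed.

Lemma goodh2 (e1 e2 : R) : 0 < e1 -> 0 < e2 -> goodh (h2 e1 e2).
Proof.
move=> e10 e20; have [H0 Hp Hm Hr] := goodh1 e1 e10.
have [G0 Gp Gm Gr] := goodh1 e2 e20.
rewrite /h1 in H0 Hp Hm Hr G0 Gp Gm Gr.
have one1 : forall e : R, 1 `^ e = 1 by move=> e; rewrite powR1.
split; rewrite /h2.
- by rewrite ler01.
- by move=> r r0; case: ifP => _; [exact: Hp|exact: Gp].
- move=> r s r0 rs; case: ifPn => r1; case: ifPn => s1.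
  + exact: Hm.
  + have h1r : r `^ e1 <= 1.
      rewrite -[leRHS](one1 e1); apply: ge0_ler_powR => //; rewrite ?nnegrE ?ltW//.
    apply: le_lt_trans h1r _.
    rewrite -ltNge in s1.
    by rewrite -[ltLHS](one1 e2); apply: Gm.
  + by exfalso; move: r1 s1; rewrite -ltNge => r1 s1; have := lt_trans r1 (lt_le_trans rs s1); rewrite ltxx.
  + exact: Gm.
- move=> a b a0 ab; have [a1|a1] := ltP a 1.
  + move: ab; rewrite (ltW a1) => ab.
    have [r ar rb] := Hr a b a0 ab.
    exists (Num.min r 1); first by rewrite lt_min ar a1.
    have -> : Num.min r 1 <= 1 by have := ge_min 1 r 1; rewrite lexx orbT.
    apply: le_lt_trans rb; apply: (ge0_ler_powR (ltW e10)).
    * by rewrite nnegrE; apply: ltW; rewrite lt_min (lt_trans a0 ar) ltr01.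
    * by rewrite nnegrE; apply: ltW; exact: lt_trans ar.
    * by have := ge_min r r 1; rewrite lexx.
  + have ha : (if a <= 1 then a `^ e1 else a `^ e2) = a `^ e2.
      case: ifPn => // a1'; have -> : a = 1 by apply/le_anti; rewrite a1 a1'.
      by rewrite !one1.
    rewrite ha in ab; have [r ar rb] := Gr a b a0 ab.
    exists r => //; case: ifPn => // r1.
    by have := lt_le_trans (le_lt_trans a1 ar) r1; rewrite ltxx.
Qed.


End Goodh.

Section Pointwise.
Context {R : realType} {l : nat}.
Implicit Types (S : set 'rV[R]_l) (h : R -> R).

Definition fh h (r : R) := (h r)^-1.
Definition aS S : R := inf (@enorm R l @` S).
Definition ES h S : \bar R := \esum_(x in S) (fh h (enorm x))%:E.

Lemma CIE h S : CI h S = ((fh h (aS S))%:E / (ES h S - (fh h (aS S))%:E))%E.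
Proof. by []. Qed.

Lemma enorm_ge0 (x : 'rV[R]_l) : 0 <= enorm x.
Proof. exact: sqrtr_ge0. Qed.

Lemma has_lb_S S : has_lbound (@enorm R l @` S).
Proof. by exists 0 => _ [x _ <-]; exact: enorm_ge0. Qed.

Lemma aS_ge0 S : 0 <= aS S.
Proof.
rewrite /aS; have [S0|/set0P[x Sx]] := eqVneq S set0.
  by rewrite S0 image_set0 inf0.
apply: lb_le_inf; first by exists (enorm x), x.
by move=> _ [y _ <-]; exact: enorm_ge0.
Qed.

Lemma aS_le S x : S x -> aS S <= enorm x.
Proof. by move=> Sx; apply: ge_inf; [exact: has_lb_S|exists x]. Qed.

Variable h : R -> R.
Hypothesis gh : goodh h.

Lemma fh0 : fh h 0 = 0.
Proof. by case: gh => h0 _ _ _; rewrite /fh h0 invr0. Qed.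

Lemma fh_gt0 r : 0 < r -> 0 < fh h r.
Proof. by case: gh => _ hp _ _ r0; rewrite /fh invr_gt0 hp. Qed.

Lemma fh_ge0 r : 0 <= r -> 0 <= fh h r.
Proof.
rewrite le_eqVlt => /predU1P[<-|r0]; first by rewrite fh0.
exact/ltW/fh_gt0.
Qed.

Lemma fh_anti r s : 0 < r -> r <= s -> fh h s <= fh h r.
Proof.
case: gh => _ hp hm _ r0; rewrite le_eqVlt => /predU1P[->//|rs].
rewrite /fh; apply/ltW; rewrite ltf_pV2 ?posrE ?hp//; last exact: lt_trans rs.
exact: hm.
Qed.

Lemma fh_santi r s : 0 < r -> r < s -> fh h s < fh h r.
Proof.
case: gh => _ hp hm _ r0 rs.
rewrite /fh; rewrite ltf_pV2 ?posrE ?hp//; last exact: lt_trans rs.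
exact: hm.
Qed.

Lemma ES_ge0 S : (0 <= ES h S)%E.
Proof. by apply: esum_ge0 => x _; rewrite lee_fin fh_ge0 ?enorm_ge0. Qed.

Lemma ES_ge_C S : ((fh h (aS S))%:E <= ES h S)%E.
Proof.
have [a0|a0] := eqVneq (aS S) 0; first by rewrite a0 fh0 ES_ge0.
have apos : 0 < aS S by rewrite lt_neqAle eq_sym a0 aS_ge0.
have [S0|/set0P[x Sx]] := eqVneq S set0.
  by move: a0; rewrite /aS S0 image_set0 inf0 eqxx.
have g0 : forall x, S x -> 0 <= fh h (enorm x) by move=> y _; apply: fh_ge0; exact: enorm_ge0.
have [[x0 Sx0 ex0]|natt] := pselect (exists2 x0, S x0 & enorm x0 = aS S).
  have := @esum_seq_ge R _ S (fun x => fh h (enorm x)) [:: x0] g0 isT.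
  rewrite big_seq1 ex0; apply => y; rewrite inE => /eqP ->; rewrite in_setE; exact: Sx0.
case: gh => _ hp hm hr.
have ha := hp _ apos.
have [r ar hrb] := hr (aS S) (2 * h (aS S)) apos ltac:(lra).
have ne : (@enorm R l @` S) !=set0 by exists (enorm x), x.
have [_ [x1 Sx1 <-] x1r] := inf_lt ne ar.
have ax1 : aS S < enorm x1.
  rewrite lt_neqAle aS_le // andbT; apply/eqP => e; apply: natt; by exists x1.
have [_ [x2 Sx2 <-] x21] := inf_lt ne ax1.
have ax2 : aS S < enorm x2.
  rewrite lt_neqAle aS_le // andbT; apply/eqP => e; apply: natt; by exists x2.
have x12 : x1 != x2 by apply/eqP => e; move: x21; rewrite e ltxx.
have := @esum_seq_ge R _ S (fun x => fh h (enorm x)) [:: x1; x2] g0.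
rewrite /= inE x12 => /(_ isT).
have sub : {subset [:: x1; x2] <= S}.
  by move=> y; rewrite !inE => /orP[] /eqP ->; rewrite ?in_setE.
move=> /(_ sub); apply: le_trans; rewrite lee_fin big_cons big_seq1.
have key : forall y : 'rV[R]_l, aS S < enorm y -> enorm y < r -> (2 * h (aS S))^-1 < fh h (enorm y).
  move=> y ay yr; have y0 : 0 < enorm y by exact: lt_trans apos ay.
  have hy : 0 < h (enorm y) by apply: hp.
  rewrite /fh ltf_pV2 ?posrE ?mulr_gt0 //.
  apply: lt_trans hrb; exact: hm y0 yr.
have k1 := key x1 ax1 x1r.
have k2 := key x2 ax2 (lt_trans x21 x1r).
apply: ltW; apply: le_lt_trans (ltrD k1 k2) => //.
rewrite /fh invfM; lra.
Qed.

End Pointwise.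

Section CIev.
Context {R : realType} {l : nat}.
Implicit Types (S : set 'rV[R]_l).
Variable h : R -> R.
Hypothesis gh : goodh h.

Lemma CI_ge0 S : (0 <= CI h S)%E.
Proof.
rewrite CIE; apply: mule_ge0; first by rewrite lee_fin fh_ge0 // aS_ge0.
rewrite inve_ge0 sube_ge0 ?ES_ge_C//; by right.
Qed.

Lemma CI_gt_pos S (x : R) : 0 < x ->
  (x%:E < CI h S)%E = (ES h S < (fh h (aS S) * ((1 + x) / x))%:E)%E.
Proof.
move=> x0; rewrite CIE.
have := @ES_ge_C R l h gh S; have := @ES_ge0 R l h gh S.
set C := fh h (aS S); have C0 : 0 <= C by rewrite fh_ge0 // aS_ge0.
case: (ES h S) => [e| |] //= e0 Ce; last first.
  rewrite /= addye// invey mule0 ltNge (ltW _) ?lte_fin// ltNge leey //.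
rewrite lee_fin in Ce; rewrite lte_fin.
have [C00|Cp] := eqVneq C 0.
  rewrite C00 mul0e ltNge (ltW _) ?lte_fin// mul0r ltNge.
  by rewrite lee_fin in e0; rewrite e0.
have Cpos : 0 < C by rewrite lt_neqAle eq_sym Cp.
rewrite -EFinB inver.
have [eC|eC] := eqVneq (e - C) 0.
  have -> : e = C by apply/eqP; rewrite -subr_eq0 eC.
  rewrite mulry gtr0_sg // mul1e ltry.
  have : 1 < (1 + x) / x by rewrite ltr_pdivlMr //; lra.
  move=> q; apply/esym; rewrite -{1}(mulr1 C) ltr_pM2l //.
have eCp : 0 < e - C by rewrite lt_neqAle eq_sym eC subr_ge0 Ce.
rewrite -EFinM lte_fin ltr_pdivlMr // mulrA ltr_pdivlMr //.
by apply/idP/idP; lra.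
Qed.

Lemma CI_gt0 S :
  (0 < CI h S)%E <-> (0 < fh h (aS S) /\ (ES h S < +oo)%E).
Proof.
rewrite CIE.
have := @ES_ge_C R l h gh S; have := @ES_ge0 R l h gh S.
set C := fh h (aS S); have C0 : 0 <= C by rewrite fh_ge0 // aS_ge0.
case: (ES h S) => [e| |] //= e0 Ce; last first.
  by rewrite /= addye// invey mule0 !ltxx; split => // -[].
rewrite ?lee_fin in Ce.
have [C00|Cp] := eqVneq C 0.
  by rewrite C00 mul0e !ltxx; split => // -[].
have Cpos : 0 < C by rewrite lt_neqAle eq_sym Cp.
split => _; first by split => //; rewrite ltry.
rewrite -EFinB inver.
have [eC|eC] := eqVneq (e - C) 0.
  by rewrite mulry gtr0_sg // mul1e ltry.
have eCp : 0 < e - C by rewrite lt_neqAle eq_sym eC subr_ge0 Ce.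
by rewrite -EFinM lte_fin divr_gt0.
Qed.

End CIev.

Section Compare.
Context {R : realType} {l : nat}.
Implicit Types (S : set 'rV[R]_l).
Variables hA hB : R -> R.
Hypothesis gA : goodh hA.
Hypothesis gB : goodh hB.
Hypothesis ratio : forall a r : R, 0 < a -> a <= r -> hB a * hA r <= hA a * hB r.

Lemma fh_ratio a r : 0 < a -> a <= r ->
  fh hB r <= (fh hB a / fh hA a) * fh hA r.
Proof.
move=> a0 ar; have r0 : 0 < r by exact: lt_le_trans ar.
case: gA => _ pA _ _; case: gB => _ pB _ _.
have hAa := pA _ a0; have hAr := pA _ r0; have hBa := pB _ a0; have hBr := pB _ r0.
rewrite /fh invrK.
have c0 : 0 <= (hB a)^-1 * (hA r)^-1 * (hB r)^-1.
  by rewrite !mulr_ge0 // ltW // invr_gt0.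
have e1 : (hB r)^-1 = (hB a * hA r) * ((hB a)^-1 * (hA r)^-1 * (hB r)^-1).
  by field; rewrite !gt_eqF.
have e2 : (hB a)^-1 * hA a * (hA r)^-1 = (hA a * hB r) * ((hB a)^-1 * (hA r)^-1 * (hB r)^-1).
  by field; rewrite !gt_eqF.
rewrite e1 e2; apply: ler_wpM2r => //; exact: ratio.
Qed.

Lemma ES_ratio S : 0 < aS S ->
  (ES hB S <= (fh hB (aS S) / fh hA (aS S))%:E * ES hA S)%E.
Proof.
move=> a0; set k := fh hB (aS S) / fh hA (aS S).
have k0 : 0 < k by rewrite /k divr_gt0 // (fh_gt0 _ gA, fh_gt0 _ gB).
apply: esum_le_seq => s us sS.
apply: (@le_trans _ _ (k%:E * (\sum_(x <- s) fh hA (enorm x))%:E)%E).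
  rewrite -EFinM lee_fin mulr_sumr [X in _ <= X]big_seq big_seq; apply: ler_sum => x xs.
  apply: fh_ratio => //; apply: aS_le; rewrite -in_setE; exact: sS.
apply: lee_wpmul2l; first by rewrite lee_fin ltW.
apply: esum_seq_ge => // x _; apply: fh_ge0 => //; exact: enorm_ge0.
Qed.

Lemma ev_pos_incl S (x : R) : 0 < x ->
  (ES hA S < (fh hA (aS S) * ((1 + x) / x))%:E)%E ->
  (ES hB S < (fh hB (aS S) * ((1 + x) / x))%:E)%E.
Proof.
move=> x0 H.
have kx : 0 < (1 + x) / x by rewrite divr_gt0 //; lra.
have a0 : 0 < aS S.
  rewrite lt_neqAle aS_ge0 andbT; apply/eqP => a0.
  move: H; rewrite -a0 fh0 // mul0r ltNge ES_ge0 //.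
have cA := fh_gt0 _ gA _ a0; have cB := fh_gt0 _ gB _ a0.
apply: le_lt_trans (ES_ratio S a0) _.
have -> : fh hB (aS S) * ((1 + x) / x) =
   (fh hB (aS S) / fh hA (aS S)) * (fh hA (aS S) * ((1 + x) / x)).
  by field; rewrite !gt_eqF.
rewrite [X in (_ < X)%E]EFinM lte_pmul2l // lte_fin divr_gt0 //.
Qed.

Lemma ev_zero_incl S :
  (0 < fh hA (aS S) /\ (ES hA S < +oo)%E) ->
  (0 < fh hB (aS S) /\ (ES hB S < +oo)%E).
Proof.
move=> [cA H].
have a0 : 0 < aS S.
  rewrite lt_neqAle aS_ge0 andbT; apply/eqP => a0.
  by move: cA; rewrite -a0 fh0 // ltxx.
have cB := fh_gt0 _ gB _ a0; split => //.
apply: le_lt_trans (ES_ratio S a0) _.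
move: H (ES_ge0 _ gA S); case: (ES hA S) => // e _ _.
by rewrite -EFinM ltry.
Qed.

End Compare.

Section Ratios.
Context {R : realType}.

Lemma pow_mix (a r p q : R) : 0 < a -> a <= r -> p <= q ->
  a `^ q * r `^ p <= a `^ p * r `^ q.
Proof.
move=> a0 ar pq; have r0 : 0 < r by exact: lt_le_trans ar.
have -> : q = p + (q - p) by rewrite addrC subrK.
have Ea : a `^ (p + (q - p)) = a `^ p * a `^ (q - p) by rewrite powRD // (gt_eqF a0) implybT.
have Er : r `^ (p + (q - p)) = r `^ p * r `^ (q - p) by rewrite powRD // (gt_eqF r0) implybT.
rewrite Ea Er mulrAC mulrA; apply: ler_wpM2l.
  by apply: mulr_ge0; exact: powR_ge0.
apply: ge0_ler_powR => //; rewrite ?nnegrE ?subr_ge0 // ltW //.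
Qed.

Lemma ratio12 (e1 e2 : R) : 0 < e1 -> e1 <= e2 -> forall a r, 0 < a -> a <= r ->
  h2 e1 e2 a * h1 e1 r <= h1 e1 a * h2 e1 e2 r.
Proof.
move=> e10 e12 a r a0 ar; rewrite /h1 /h2.
have r0 : 0 < r by exact: lt_le_trans ar.
case: ifPn => a1; case: ifPn => r1.
- by rewrite mulrC.
- apply: ler_wpM2l; first exact: powR_ge0.
  apply: ler_powR => //; rewrite -ltNge in r1; exact: ltW.
- by exfalso; move: a1; rewrite (le_trans ar r1).
- by rewrite -ltNge in a1; apply: pow_mix.
Qed.

Lemma ratio21 (e1 e2 : R) : 0 < e2 -> e2 <= e1 -> forall a r, 0 < a -> a <= r ->
  h1 e1 a * h2 e1 e2 r <= h2 e1 e2 a * h1 e1 r.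
Proof.
move=> e20 e21 a r a0 ar; rewrite /h1 /h2.
have r0 : 0 < r by exact: lt_le_trans ar.
case: ifPn => r1; case: ifPn => a1.
- by rewrite mulrC.
- by exfalso; move: a1; rewrite (le_trans ar r1).
- apply: ler_wpM2l; first exact: powR_ge0.
  apply: ler_powR => //; rewrite -ltNge in r1; exact: ltW.
- by rewrite -ltNge in a1; apply: pow_mix.
Qed.

End Ratios.

Module TopoM.
Import numFieldNormedType.Exports.


Section Topo.
Context {R : realType} {l : nat}.

Lemma sumsq_cont :
  continuous (fun x : 'rV[R]_l => \sum_(i < l) x ord0 i ^+ 2).
Proof.
suff : forall s : seq 'I_l, continuous (fun y : 'rV[R]_l => \sum_(i <- s) y ord0 i ^+ 2).
  by move=> /(_ (index_enum _)).
elim=> [|i s IH].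
  have -> : (fun y : 'rV[R]_l => \sum_(i <- [::]) y ord0 i ^+ 2) = fun=> 0.
    by apply/funext => y; rewrite big_nil.
  exact: cst_continuous.
have -> : (fun y : 'rV[R]_l => \sum_(j <- i :: s) y ord0 j ^+ 2) =
   (fun y : 'rV[R]_l => y ord0 i) \* (fun y => y ord0 i) + (fun y => \sum_(j <- s) y ord0 j ^+ 2).
  by apply/funext => y; rewrite big_cons /= expr2.
move=> x; apply: continuousD; last exact: IH.
by apply: continuousM; apply: coord_continuous.
Qed.

Lemma enorm_cont : continuous (@enorm R l).
Proof.
move=> x; apply: continuous_comp; first exact: sumsq_cont.
exact: sqrt_continuous.
Qed.

Definition ball_lt (t : R) : set 'rV[R]_l := [set x | enorm x < t].
Definition ann (u v : R) : set 'rV[R]_l := [set x | u <= enorm x < v].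

Lemma open_ball_lt (t : R) : open (ball_lt t).
Proof.
have -> : ball_lt t = enorm @^-1` [set y | y < t] by [].
apply: open_comp; last exact: open_lt.
move=> x _; exact: enorm_cont.
Qed.

Lemma borel_ball t : borel_set (ball_lt t).
Proof. by apply: sub_sigma_algebra; exact: open_ball_lt. Qed.

Lemma borel_ann u v : borel_set (ann u v).
Proof.
have -> : ann u v = ball_lt v `&` ~` ball_lt u.
  apply/seteqP; split => x /=; rewrite /ball_lt /ann /=.
    by move=> /andP[ux xv]; split => //; apply/negP; rewrite -leNgt.
  by move=> [xv /negP]; rewrite -leNgt => ux; rewrite ux xv.
have := @measurableI _ (g_sigma_algebraType (@open 'rV[R]_l)) (ball_lt v) (~` ball_lt u).
apply; first exact: borel_ball.
apply: (@measurableC _ (g_sigma_algebraType (@open 'rV[R]_l))); exact: borel_ball.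
Qed.

Lemma bounded_ball t : Defs.bounded_set (ball_lt t).
Proof. by exists t => x /ltW. Qed.

Lemma bounded_ann u v : Defs.bounded_set (ann u v).
Proof. by exists v => x /andP[_ /ltW]. Qed.

End Topo.

Section Atleast.
Context {R : realType} {l : nat}.
Implicit Types (S A : set 'rV[R]_l).

Definition atleast S A (k : nat) :=
  exists s : seq 'rV[R]_l, [/\ uniq s, size s = k & forall x, x \in s -> (S `&` A) x].

Lemma atleastP S A k : atleast S A k <-> ~ (exists j, (j < k)%N /\ count_eq S A j).
Proof.
split.
  move=> [s [us sk sSA]] [j [jk [t [ut [tj tE]]]]].
  have : (size s <= size t)%N.
    apply: uniq_leq_size => // x /sSA; rewrite -tE /=.
    by [].
  by rewrite sk tj leqNgt jk.
elim: k => [_|k IH H]; first by exists [::].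
have [s [us sk sSA]] : atleast S A k.
  apply: IH => -[j [jk cj]]; apply: H; exists j; split => //; exact: ltnW.
have [all|/existsNP[x /not_implyP[SAx xs]]] := pselect (forall x, (S `&` A) x -> x \in s); last first.
  exists (x :: s); split => //=.
    by rewrite us andbT; apply/negP.

  - by rewrite sk.
  - by move=> y; rewrite inE => /orP[/eqP ->//|/sSA].
exfalso; apply: H; exists k; split => //.
exists s; split => //; split => //; apply/seteqP; split => y /=.
  exact: sSA.
exact: all.
Qed.

End Atleast.

End TopoM.
Import TopoM.

Section Basic.
Context {R : realType} {l : nat}.
Implicit Types (S A : set 'rV[R]_l).

Lemma count_eq0 S A : count_eq S A 0 <-> S `&` A = set0.
Proof.
split.
  by move=> [s [_ [/size0nil -> <-]]]; apply/seteqP; split => x.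
move=> SA; exists [::]; split => //; split => //; rewrite SA.
by apply/seteqP; split => x.
Qed.

Lemma atleast1 S A : atleast S A 1 <-> exists x, S x /\ A x.
Proof.
split.
  by move=> [[|x [|? ?]] [_ //= _ H]]; exists x; apply: H; rewrite inE.
move=> [x [Sx Ax]]; exists [:: x]; split => // y; rewrite inE => /eqP ->; by split.
Qed.

End Basic.

Section Meas1.
Context d (Omega : measurableType d) (R : realType) (l : nat)
  (Phi : Omega -> set 'rV[R]_l).
Hypothesis Hm : forall A k, borel_set A -> Defs.bounded_set A ->
  measurable [set w | count_eq (Phi w) A k].

Lemma meas_count A k : borel_set A -> Defs.bounded_set A ->
  measurable [set w | count_eq (Phi w) A k].
Proof. exact: Hm. Qed.

Lemma meas_atleast A k : borel_set A -> Defs.bounded_set A ->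
  measurable [set w | atleast (Phi w) A k].
Proof.
move=> bA bdA.
have -> : [set w | atleast (Phi w) A k] =
   ~` \bigcup_j (if (j < k)%N then [set w | count_eq (Phi w) A j] else set0).
  apply/seteqP; split => w /=.
    move=> /atleastP H [j _]; case: ifPn => // jk cj; apply: H; by exists j.
  move=> H; apply/atleastP => -[j [jk cj]]; apply: H; exists j => //; by rewrite jk.
apply: measurableC; apply: bigcupT_measurable => j.
by case: ifPn => _ //; exact: Hm.
Qed.

Variable h : R -> R.
Hypothesis gh : goodh h.

Lemma meas_fh_gt (c : R) : 0 <= c ->
  measurable [set w | c < fh h (aS (Phi w))].
Proof.
move=> c0.
have -> : [set w | c < fh h (aS (Phi w))] =
  \bigcup_(q : rat) (if (0 < @ratr R q) && (c < fh h (@ratr R q)) then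
     [set w | atleast (Phi w) (ball_lt (@ratr R q)) 1] `&`
     \bigcup_n [set w | count_eq (Phi w) (ball_lt (n.+1%:R^-1)) 0]
   else set0).
  apply/seteqP; split => w /=.
  - move=> cf.
    set S := Phi w in cf *; set a := aS S in cf *.
    have a0 : 0 < a.
      rewrite lt_neqAle aS_ge0 andbT; apply/eqP => a0.
      by move: cf; rewrite -a0 fh0 // ltNge c0.
    have [S0|/set0P[x0 Sx0]] := eqVneq S set0.
      by move: a0; rewrite /a /aS S0 image_set0 inf0 ltxx.
    case: gh => _ hp hm hr.
    have [r ar cr] : exists2 r, a < r & c < fh h r.
      have [c00|cp] := eqVneq c 0.
        exists (a + 1); first lra.
        by rewrite c00; apply: fh_gt0 => //; lra.
      have cpos : 0 < c by rewrite lt_neqAle eq_sym cp.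
      have : h a < c^-1.
        rewrite -[h a]invrK ltf_pV2 ?posrE ?invr_gt0 ?hp //.
      move=> /(hr _ _ a0)[r ar hrc]; exists r => //.
      rewrite /fh -[c]invrK ltf_pV2 ?posrE ?hp ?invr_gt0 //.
      exact: lt_trans ar.
    have [q /[!in_itv]/= /andP[aq qr]] := rat_in_itvoo ar.
    exists q => //.
    have q0 : 0 < @ratr R q by exact: lt_trans aq.
    rewrite q0 /=.
    rewrite (lt_le_trans cr (fh_anti _ gh _ _ q0 (ltW qr))).
    split.
      apply/atleast1.
      have ne : (@enorm R l @` S) !=set0 by exists (enorm x0), x0.
      have [_ [x Sx <-] xq] := inf_lt ne aq.
      by exists x.
    have [k ka] := ltr_add_invr a0; rewrite add0r in ka.
    exists k => //; apply/count_eq0; apply/seteqP; split => // x [Sx].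
    rewrite /ball_lt /= => xk.
    have := aS_le _ _ Sx; rewrite -/S -/a => ax.
    by have := lt_trans (le_lt_trans ax xk) ka; rewrite ltxx.
  - move=> [q _]; case: ifPn => // /andP[q0 cq] [/atleast1 [y [Sy yq]] [k _ /count_eq0 ck]].
    set S := Phi w in Sy ck *.
    have ak : k.+1%:R^-1 <= aS S.
      apply: lb_le_inf; first by exists (enorm y), y.
      move=> _ [x Sx <-]; rewrite leNgt; apply/negP => xk.
      by have : (S `&` ball_lt k.+1%:R^-1) x by []; rewrite ck.
    have a0 : 0 < aS S by apply: lt_le_trans ak; rewrite invr_gt0.
    apply: lt_le_trans cq _; apply: fh_anti => //.
    exact: le_trans (aS_le _ _ Sy) (ltW yq).
apply: bigcupT_measurable_rat => q; case: ifPn => // _.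
apply: measurableI.
  apply: meas_atleast; [exact: borel_ball|exact: bounded_ball].
apply: bigcupT_measurable => k; apply: Hm; [exact: borel_ball|exact: bounded_ball].
Qed.

End Meas1.

Section Grid.
Context {R : realType} {l : nat}.
Implicit Types (S : set 'rV[R]_l).
Variable h : R -> R.
Hypothesis gh : goodh h.

Definition dl (n : nat) : R := (n.+1%:R)^-1.
Definition Mn (n : nat) := (n.+1 * n.+1)%N.
Definition annb n j (x : 'rV[R]_l) : bool :=
  ((j.+1)%:R * dl n <= enorm x) && (enorm x < (j.+2)%:R * dl n).
Definition cc n j := fh h ((j.+2)%:R * dl n).
Definition lowsum n (ks : seq nat) := \sum_(j < Mn n) (nth 0%N ks j)%:R * cc n j.
Definition goodks S n ks :=
  forall j, (j < Mn n)%N -> atleast S [set x | annb n j x] (nth 0%N ks j).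

Lemma dl_gt0 n : 0 < dl n.
Proof. by rewrite /dl invr_gt0 ltr0n. Qed.

Lemma sum_ge_const (s : seq 'rV[R]_l) (g : 'rV[R]_l -> R) c :
  (forall x, x \in s -> c <= g x) -> (size s)%:R * c <= \sum_(x <- s) g x.
Proof.
elim: s => [|x s IH] H; first by rewrite big_nil mul0r.
rewrite big_cons /= -natr1 mulrDl mul1r addrC; apply: lerD.
  by apply: H; rewrite inE eqxx.
by apply: IH => y ys; apply: H; rewrite inE ys orbT.
Qed.

Lemma annb_disj n i j x : annb n i x -> annb n j x -> i = j.
Proof.
have d0 := dl_gt0 n.
move=> /andP[a1 a2] /andP[b1 b2]; apply/eqP; rewrite eqn_leq; apply/andP; split.
  have := le_lt_trans a1 b2; by rewrite ltr_pM2r // ltr_nat !ltnS.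
have := le_lt_trans b1 a2; by rewrite ltr_pM2r // ltr_nat !ltnS.
Qed.

Lemma annb_pos n j x : annb n j x -> 0 < enorm x.
Proof.
move=> /andP[a1 _]; apply: lt_le_trans a1.
by rewrite mulr_gt0 ?dl_gt0 // ltr0n.
Qed.

Lemma cc_le n j x : annb n j x -> cc n j <= fh h (enorm x).
Proof.
move=> ax; have := ax => /andP[_ a2]; apply: fh_anti => //; last exact: ltW.
exact: annb_pos ax.
Qed.

Lemma lower S n ks : goodks S n ks -> ((lowsum n ks)%:E <= ES h S)%E.
Proof.
move=> gk.
suff [s [us sS le]] : exists s, [/\ uniq s, {subset s <= S} &
    lowsum n ks <= \sum_(x <- s) fh h (enorm x)].
  have g0 : forall x, S x -> 0 <= fh h (enorm x).
    by move=> x _; apply: fh_ge0 => //; exact: enorm_ge0.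
  apply: le_trans (@esum_seq_ge R _ S (fun x => fh h (enorm x)) s g0 us sS).
  by rewrite lee_fin.
rewrite /lowsum.
suff : forall m, (m <= Mn n)%N -> exists s, [/\ uniq s,
   forall x, x \in s -> S x /\ exists2 j, (j < m)%N & annb n j x &
   \sum_(j < m) (nth 0%N ks j)%:R * cc n j <= \sum_(x <- s) fh h (enorm x)].
  move=> /(_ (Mn n) (leqnn _))[s [us sS le]]; exists s; split => //.
  by move=> x xs; rewrite in_setE; have [] := sS x xs.
elim=> [_|m IH mM].
  by exists [::]; split => //; rewrite !big_nil big_ord0.
have [s [us sS le]] := IH (ltnW mM).
have [t [ut st tA]] := gk m mM.
exists (s ++ t); split.
- rewrite cat_uniq us ut andbT /=; apply/hasPn => x xt.
  apply/negP => xs; have [_ [j jm ajx]] := sS x xs.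
  have [_ /= amx] := tA x xt.
  by have := annb_disj n j m x ajx amx => jm'; move: jm; rewrite jm' ltnn.
- move=> x; rewrite mem_cat => /orP[xs|xt].
    have [Sx [j jm ajx]] := sS x xs; split => //; exists j => //; exact: ltnW.
  have [Sx /= amx] := tA x xt; split => //; by exists m.
- rewrite big_ord_recr big_cat /=; apply: lerD => //.
  rewrite -st; apply: sum_ge_const => x xt.
  by have [_ /= amx] := tA x xt; exact: cc_le.
Qed.

End Grid.

Section Approx.
Context {R : realType} {l : nat}.
Implicit Types (S : set 'rV[R]_l).
Variable h : R -> R.
Hypothesis gh : goodh h.

Lemma fh_rc a c : 0 < a -> c < fh h a -> exists2 r, a < r & c < fh h r.
Proof.
move=> a0 cf; case: gh => _ hp hm hr.
have [c0|cpos] := leP c 0.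
  exists (a + 1); first lra.
  by apply: le_lt_trans c0 _; apply: fh_gt0 => //; lra.
have : h a < c^-1.
  rewrite -[h a]invrK ltf_pV2 ?posrE ?invr_gt0 ?hp //.
move=> /(hr _ _ a0)[r ar hrc]; exists r => //.
rewrite /fh -[c]invrK ltf_pV2 ?posrE ?hp ?invr_gt0 //.
exact: lt_trans ar.
Qed.

Lemma dl_anti m n : (m <= n)%N -> dl n <= @dl R m.
Proof. by move=> mn; rewrite /dl lef_pV2 ?posrE ?ltr0n // ler_nat. Qed.

Lemma eventually_seq (s : seq 'rV[R]_l) (P : 'rV[R]_l -> nat -> Prop) :
  (forall x, x \in s -> exists N, forall n, (N <= n)%N -> P x n) ->
  exists N, forall x, x \in s -> forall n, (N <= n)%N -> P x n.
Proof.
elim: s => [|x s IH] H; first by exists 0%N.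
have [N1 HN1] : exists N, forall x, x \in s -> forall n, (N <= n)%N -> P x n.
  by apply: IH => y ys; apply: H; rewrite inE ys orbT.
have [N2 HN2] := H x (mem_head _ _).
exists (maxn N1 N2) => y; rewrite inE => /orP[/eqP ->|ys] n; rewrite geq_max => /andP[n1 n2].
  exact: HN2.
exact: HN1.
Qed.

Lemma sum_cst_seq (s : seq 'rV[R]_l) (c : R) : \sum_(x <- s) c = (size s)%:R * c.
Proof.
elim: s => [|x s IH]; first by rewrite big_nil mul0r.
by rewrite big_cons IH /= -natr1 mulrDl mul1r addrC.
Qed.

Lemma count_sum (s : seq 'rV[R]_l) (p : pred 'rV[R]_l) (c : R) :
  (count p s)%:R * c = \sum_(x <- s | p x) c.
Proof.
elim: s => [|x s IH]; first by rewrite big_nil mul0r.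
rewrite big_cons /= natrD mulrDl -IH; case: (p x) => /=.
  by rewrite mul1r.
by rewrite mul0r add0r.
Qed.

Lemma approx S y : (y%:E < ES h S)%E ->
  exists n ks, y < lowsum h n ks /\ goodks S n ks.
Proof.
move=> /esum_seq_gt[s [us sS]]; rewrite lte_fin => ys.
set G := \sum_(x <- s) fh h (enorm x) in ys.
set eps := (G - y) / ((size s)%:R + 1).
have sz0 : 0 < (size s)%:R + 1 :> R by rewrite ltr_wpDl // ler0n.
have eps0 : 0 < eps by rewrite /eps divr_gt0 // subr_gt0.
pose P (x : 'rV[R]_l) (n : nat) := 0 < enorm x -> [/\ dl n <= enorm x, enorm x < n.+1%:R &
   fh h (enorm x) - eps < fh h (enorm x + dl n)].
have [N HN] : exists N, forall x, x \in s -> forall n, (N <= n)%N -> P x n.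
  apply: eventually_seq => x xs.
  have [x0|xpos] := leP (enorm x) 0.
    by exists 0%N => n _ xp; move: x0; rewrite leNgt xp.
  have [r xr cr] := @fh_rc (enorm x) (fh h (enorm x) - eps) xpos ltac:(lra).
  have [k1 k1x] := ltr_add_invr xpos; rewrite add0r in k1x.
  have [k2 k2x] := ltr_add_invr xr.
  exists (maxn k1 (maxn k2 (Num.truncn (enorm x)))) => n.
  rewrite !geq_max => /and3P[n1 n2 n3] _; split.
  - apply: le_trans (dl_anti _ _ n1) _; exact: ltW k1x.
  - have := Num.Theory.truncn_itv (enorm_ge0 x) => /andP[_ lt].
    apply: lt_le_trans lt _; rewrite ler_nat; exact: n3.
  - apply: lt_le_trans cr _; apply: fh_anti => //.
      by have := @dl_gt0 R n; lra.
    apply: ltW; apply: le_lt_trans k2x; rewrite lerD2l; exact: dl_anti _ _ n2.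
set n := N.
set ks := mkseq (fun j => count (annb n j) s) (Mn n).
exists n, ks; split; last first.
  move=> j jM; rewrite nth_mkseq //; exists (seq.filter (annb n j) s); split.
  - exact: filter_uniq.
  - by rewrite size_filter.
  - move=> x; rewrite mem_filter => /andP[ax xs]; split => //.
    by rewrite -in_setE; apply: sS.
rewrite /lowsum.
have -> : \sum_(j < Mn n) (nth 0%N ks j)%:R * cc h n j =
    \sum_(x <- s) \sum_(j < Mn n | annb n j x) cc h n j.
  transitivity (\sum_(j < Mn n) \sum_(x <- s | annb n j x) cc h n j).
    by apply: eq_bigr => j _; rewrite nth_mkseq // count_sum.
  by rewrite (exchange_big_dep xpredT).
have key : forall x, x \in s -> fh h (enorm x) - eps <= \sum_(j < Mn n | annb n j x) cc h n j.
  move=> x xs.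
  have sum0 : 0 <= \sum_(j < Mn n | annb n j x) cc h n j.
    apply: sumr_ge0 => j _; apply: fh_ge0 => //.
    by apply: mulr_ge0; [exact: ler0n| exact: ltW (dl_gt0 n)].
  have [x0|xpos] := leP (enorm x) 0.
    have -> : enorm x = 0 by apply/le_anti; rewrite x0 enorm_ge0.
    rewrite fh0 // sub0r; apply: le_trans sum0; rewrite lerNl oppr0; exact: ltW.
  have [P1 P2 P3] := HN x xs N (leqnn N) xpos.
  have n0 : 0 < n.+1%:R :> R by rewrite ltr0n.
  set z := enorm x * n.+1%:R.
  have z1 : 1 <= z by move: P1; rewrite /dl -[X in X <= _]div1r ler_pdivrMr.
  have zn : z < (Mn n)%:R by rewrite /z /Mn natrM ltr_pM2r.
  have [tz zt] : ((Num.truncn z)%:R <= z) /\ (z < (Num.truncn z).+1%:R).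
    by have := Num.Theory.truncn_itv (le_trans ler01 z1) => /andP[].
  set t := Num.truncn z in tz zt.
  have t0 : (0 < t)%N by rewrite -ltnS -(ltr_nat R); exact: le_lt_trans z1 zt.
  set j := t.-1.
  have tj : t = j.+1 by rewrite prednK.
  have jM : (j < Mn n)%N.
    by rewrite -(ltr_nat R); apply: le_lt_trans zn; apply: le_trans tz; rewrite ler_nat tj.
  have ajx : annb n j x.
    apply/andP; split.
      by rewrite -tj /dl mulrC mulrC -[X in X <= _]mulr1 -mulrA mulr1 ler_pdivrMr.
    by rewrite -tj /dl ltr_pdivlMr.
  have ccle : fh h (enorm x) - eps <= cc h n j.
    apply: (le_trans (ltW P3)); apply: fh_anti => //.
      by rewrite mulr_gt0 // dl_gt0.
    rewrite -tj -natr1 mulrDl mul1r lerD2r /dl.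
    by rewrite ler_pdivrMr.
  rewrite (bigD1 (Ordinal jM)) //=.
  apply: le_trans ccle _; rewrite lerDl; apply: sumr_ge0 => i _; apply: fh_ge0 => //.
  by apply: mulr_ge0; [exact: ler0n| exact: ltW (dl_gt0 n)].
have H1 : G - (size s)%:R * eps <=
    \sum_(x <- s) \sum_(j < Mn n | annb n j x) cc h n j.
  rewrite -sum_cst_seq -sumrB big_seq [X in _ <= X]big_seq.
  by apply: ler_sum => x xs; exact: key.
apply: lt_le_trans H1.
have : (size s)%:R * eps < G - y.
  rewrite /eps mulrA ltr_pdivrMr // [X in _ < X]mulrDr mulr1 mulrC ltrDl.
  by rewrite subr_gt0.
lra.
Qed.


End Approx.

Section Meas2.
Context d (Omega : measurableType d) (R : realType) (l : nat)
  (Phi : Omega -> set 'rV[R]_l).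
Hypothesis Hm : forall A k, borel_set A -> Defs.bounded_set A ->
  measurable [set w | count_eq (Phi w) A k].
Variable h : R -> R.
Hypothesis gh : goodh h.

Lemma ES_gt_char (S : set 'rV[R]_l) y : (y%:E < ES h S)%E <->
  exists n ks, y < lowsum h n ks /\ goodks S n ks.
Proof.
split; first exact: approx.
move=> [n [ks [yl gk]]]; apply: lt_le_trans (@lower _ _ h gh S n ks gk).
by rewrite lte_fin.
Qed.

Lemma meas_ES_gt y : measurable [set w | (y%:E < ES h (Phi w))%E].
Proof.
have -> : [set w | (y%:E < ES h (Phi w))%E] =
  \bigcup_(p : nat * seq nat) (if y < lowsum h p.1 p.2 then
     \bigcap_j (if (j < Mn p.1)%N then
        [set w | atleast (Phi w) [set x | annb p.1 j x] (nth 0%N p.2 j)] else setT)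
   else set0).
  apply/seteqP; split => w /=.
    move=> /ES_gt_char[n [ks [yl gk]]]; exists (n, ks) => //=.
    rewrite yl => j _; case: ifPn => // jM; exact: gk.
  move=> [[n ks] _] /=; case: ifPn => // yl H; apply/ES_gt_char.
  exists n, ks; split => // j jM; have := H j Logic.I; by rewrite jM.
apply: countable_bigcupT_measurable => // -[n ks] /=.
case: ifPn => // _; apply: bigcapT_measurable => j; case: ifPn => // _.
apply: meas_atleast => //.
  exact: (borel_ann ((j.+1)%:R * dl n) ((j.+2)%:R * dl n)).
exact: (bounded_ann ((j.+1)%:R * dl n) ((j.+2)%:R * dl n)).
Qed.

End Meas2.

Section Meas3.
Context d (Omega : measurableType d) (R : realType) (l : nat)
  (Phi : Omega -> set 'rV[R]_l).
Hypothesis Hm : forall A k, borel_set A -> Defs.bounded_set A ->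
  measurable [set w | count_eq (Phi w) A k].
Variable h : R -> R.
Hypothesis gh : goodh h.

Lemma meas_ES_lt v : measurable [set w | (ES h (Phi w) < v%:E)%E].
Proof.
have -> : [set w | (ES h (Phi w) < v%:E)%E] =
   \bigcup_k ~` [set w | ((v - k.+1%:R^-1)%:E < ES h (Phi w))%E].
  apply/seteqP; split => w /=.
    move=> H; have [k Hk] : exists k : nat, (ES h (Phi w) <= (v - k.+1%:R^-1)%:E)%E.
      move: H; case: (ES h (Phi w)) => [e| |] //=.
        rewrite lte_fin => ev; have [k ek] := ltr_add_invr ev.
        by exists k; rewrite lee_fin lerBrDr; exact: ltW.
      by move=> _; exists 0%N; rewrite leNye.
    by exists k => //=; apply/negP; rewrite -leNgt.
  move=> [k _ /negP]; rewrite -leNgt => H; apply: le_lt_trans H _.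
  by rewrite lte_fin ltrBlDr ltrDl invr_gt0 ltr0n.
apply: bigcupT_measurable => k; apply: measurableC; exact: meas_ES_gt.
Qed.

Lemma meas_fh_gt' c : measurable [set w | c < fh h (aS (Phi w))].
Proof.
have [c0|c0] := leP 0 c; first exact: meas_fh_gt.
have -> : [set w | c < fh h (aS (Phi w))] = setT.
  apply/seteqP; split => w // _ /=; apply: lt_le_trans c0 _.
  by apply: fh_ge0 => //; exact: aS_ge0.
exact: measurableT.
Qed.

Lemma meas_ev_pos (K : R) : 0 < K ->
  measurable [set w | (ES h (Phi w) < (fh h (aS (Phi w)) * K)%:E)%E].
Proof.
move=> K0.
have -> : [set w | (ES h (Phi w) < (fh h (aS (Phi w)) * K)%:E)%E] =
  \bigcup_(q : rat) ([set w | (ES h (Phi w) < (@ratr R q)%:E)%E] `&`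
                     [set w | @ratr R q / K < fh h (aS (Phi w))]).
  apply/seteqP; split => w /=.
    move=> H; have [q [Eq qK]] : exists q : rat,
        (ES h (Phi w) < (@ratr R q)%:E)%E /\ @ratr R q < fh h (aS (Phi w)) * K.
      move: H; have := ES_ge0 _ gh (Phi w).
      case: (ES h (Phi w)) => [e| |] //= e0.
      rewrite lte_fin => eK; have [q /[!in_itv]/= /andP[eq qK]] := rat_in_itvoo eK.
      by exists q; rewrite lte_fin.
    by exists q => //; split => //=; rewrite ltr_pdivrMr.
  move=> [q _ [Eq qK]]; apply: lt_trans Eq _.
  by rewrite lte_fin -ltr_pdivrMr.
apply: bigcupT_measurable_rat => q; apply: measurableI.
  exact: meas_ES_lt.
exact: meas_fh_gt'.
Qed.

Lemma meas_ev_zero :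
  measurable [set w | 0 < fh h (aS (Phi w)) /\ (ES h (Phi w) < +oo)%E].
Proof.
have -> : [set w | 0 < fh h (aS (Phi w)) /\ (ES h (Phi w) < +oo)%E] =
  [set w | 0 < fh h (aS (Phi w))] `&` \bigcup_n [set w | (ES h (Phi w) < n%:R%:E)%E].
  apply/seteqP; split => w /= [c0 H]; split => //.
    have [n Hn] : exists n : nat, (ES h (Phi w) < n%:R%:E)%E.
      move: H; case: (ES h (Phi w)) => [e| |] //= _.
        exists (Num.truncn `|e|).+1; rewrite lte_fin.
        have := Num.Theory.truncn_itv (normr_ge0 e) => /andP[_ lt].
        by apply: le_lt_trans lt; exact: ler_norm.
      by exists 0%N; rewrite ltNye.
    by exists n.
  by move: H => [n _ H]; apply: lt_trans H _; rewrite ltry.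
apply: measurableI; first exact: meas_fh_gt'.
by apply: bigcupT_measurable => n; exact: meas_ES_lt.
Qed.

Lemma meas_CI_gt (x : R) : measurable [set w | (x%:E < CI h (Phi w))%E].
Proof.
have [x0|x0|->] := ltgtP x 0.
- have -> : [set w | (x%:E < CI h (Phi w))%E] = setT.
    apply/seteqP; split => w // _ /=; apply: lt_le_trans (CI_ge0 _ gh (Phi w)).
    by rewrite lte_fin.
  exact: measurableT.
- have -> : [set w | (x%:E < CI h (Phi w))%E] =
     [set w | (ES h (Phi w) < (fh h (aS (Phi w)) * ((1 + x) / x))%:E)%E].
    by apply/seteqP; split => w /=; rewrite CI_gt_pos.
  by apply: meas_ev_pos; rewrite divr_gt0 //; lra.
- have -> : [set w | (0%:E < CI h (Phi w))%E] =
     [set w | 0 < fh h (aS (Phi w)) /\ (ES h (Phi w) < +oo)%E].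
    by apply/seteqP; split => w /= /(CI_gt0 _ gh).
  exact: meas_ev_zero.
Qed.

End Meas3.

Lemma st_le_gen (R : realType) (d : measure_display) (Omega : measurableType d)
    (P : probability Omega R) (l : nat) (Phi : Omega -> set 'rV[R]_l) (hA hB : R -> R) :
  (forall A k, borel_set A -> Defs.bounded_set A ->
     measurable [set w | count_eq (Phi w) A k]) ->
  goodh hA -> goodh hB ->
  (forall a r : R, 0 < a -> a <= r -> hB a * hA r <= hA a * hB r) ->
  st_le P (fun w => CI hA (Phi w)) (fun w => CI hB (Phi w)).
Proof.
move=> Hm gA gB ratio x; apply: le_measure.
- rewrite inE; exact: meas_CI_gt.
- rewrite inE; exact: meas_CI_gt.
move=> w /=.
have [x0|x0|->] := ltgtP x 0.
- move=> _; apply: lt_le_trans (CI_ge0 _ gB (Phi w)); by rewrite lte_fin.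
- rewrite !CI_gt_pos //; exact: ev_pos_incl.
- by move=> /(CI_gt0 _ gA) H; apply/(CI_gt0 _ gB); exact: ev_zero_incl H.
Qed.

Theorem corollary6 (R : realType) (d : measure_display) (Omega : measurableType d)
    (P : probability Omega R) (l : nat) (lam e1 e2 : R)
    (Phi : Omega -> set 'rV[R]_l) :
  (1 <= l <= 3)%N -> 0 < lam -> is_hPPP P lam Phi ->
  ((l%:R < e1 < e2) ->
     st_le P (fun w => CI (h1 e1) (Phi w)) (fun w => CI (h2 e1 e2) (Phi w))) /\
  ((l%:R < e2 < e1) ->
     st_le P (fun w => CI (h2 e1 e2) (Phi w)) (fun w => CI (h1 e1) (Phi w))).
Proof.
move=> /andP[l1 _] _ [Hm _].
have l0 : 0 < l%:R :> R by rewrite ltr0n.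
split => /andP[le1 e12].
- have e10 : 0 < e1 by lra.
  have e20 : 0 < e2 by lra.
  apply: st_le_gen => //; [exact: goodh1|exact: goodh2|].
  by apply: ratio12 => //; exact: ltW.
- have e20 : 0 < e2 by lra.
  have e10 : 0 < e1 by lra.
  apply: st_le_gen => //; [exact: goodh2|exact: goodh1|].
  by apply: ratio21 => //; exact: ltW.
Qed.
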